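(* Let $(X,U,f)$ be a robot grid search problem. Then for all $x_I,x_I'\in X$ there exists a finite action sequence $\tilde u$ such that applying $\tilde u$ from $x_I$ and from $x_I'$ ends in the same state.
   Context: A robot grid search problem: $X\subset\mathbb{Z}\times\mathbb{Z}$ finite and connected (any two points are joined by a chain in $X$ with consecutive points at distance $1$), $U=\{(-1,0),(1,0),(0,1),(0,-1)\}$, $f(x,u)=x+u$ if $x+u\in X$ and $f(x,u)=x$ otherwise. Applying $\tilde u=(u_1,\ldots,u_K)$ from $x$ yields $f(\cdots f(f(x,u_1),u_2)\cdots,u_K)$. *)

(* Defs.v *)
From Stdlib Require Import ZArith List.
Import ListNotations.
Open Scope Z_scope.

Definition pt := (Z * Z)%type.

Definition U : list pt := [(-1, 0); (1, 0); (0, 1); (0, -1)].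

Definition padd (x u : pt) : pt := (fst x + fst u, snd x + snd u).

Definition pt_eq_dec : forall a b : pt, {a = b} + {a <> b}.
Proof. decide equality; apply Z.eq_dec. Defined.

(* Euclidean distance 1 between lattice points: exactly one coordinate
   differs, by exactly 1. *)
Definition adjacent (a b : pt) : Prop :=
  (Z.abs (fst a - fst b) + Z.abs (snd a - snd b) = 1).

Fixpoint chain (l : list pt) : Prop :=
  match l with
  | a :: ((b :: _) as t) => adjacent a b /\ chain t
  | _ => True
  end.

Definition connected (X : list pt) : Prop :=
  forall a b, In a X -> In b X ->
    exists l : list pt, (forall p, In p l -> In p X) /\ chain (a :: l ++ [b]).

Definition f (X : list pt) (x u : pt) : pt :=
  if in_dec pt_eq_dec (padd x u) X then padd x u else x.

Definition apply_seq (X : list pt) (x : pt) (us : list pt) : pt :=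
  fold_left (f X) us x.

(* Main.v *)
Require Import Defs.
From Stdlib Require Import ZArith List.
From Stdlib Require Import Lia Arith Wf_nat.
Import ListNotations.
Open Scope Z_scope.

Definition neg (u : pt) : pt := (- fst u, - snd u).
Definition psub (b a : pt) : pt := (fst b - fst a, snd b - snd a).

Fixpoint good (X : list pt) (p : pt) (ms : list pt) : Prop :=
  match ms with
  | [] => True
  | u :: ms' => In (padd p u) X /\ good X (padd p u) ms'
  end.

Definition endp (p : pt) (ms : list pt) : pt := fold_left padd ms p.

Lemma padd_comm_assoc p v u : padd (padd p v) u = padd (padd p u) v.
Proof. destruct p, v, u; unfold padd; simpl; f_equal; ring. Qed.

Lemma padd_neg p u : padd (padd p u) (neg u) = p.
Proof. destruct p, u; unfold padd, neg; simpl; f_equal; ring. Qed.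

Lemma padd_psub a b : padd a (psub b a) = b.
Proof. destruct a, b; unfold padd, psub; simpl; f_equal; ring. Qed.

Lemma good_apply X ms : forall p, good X p ms -> apply_seq X p ms = endp p ms.
Proof.
  induction ms as [|u ms IH]; intros p H; [reflexivity|].
  destruct H as [H1 H2]. unfold apply_seq, endp; simpl.
  unfold f at 2. destruct (in_dec pt_eq_dec (padd p u) X) as [_|n]; [|contradiction].
  apply IH; exact H2.
Qed.

Lemma apply_in X ms : forall p, In p X -> In (apply_seq X p ms) X.
Proof.
  induction ms as [|u ms IH]; intros p H; [exact H|].
  unfold apply_seq; simpl. apply IH. unfold f.
  destruct (in_dec pt_eq_dec (padd p u) X); auto.
Qed.

Lemma good_in X ms : forall p, In p X -> good X p ms -> In (endp p ms) X.
Proof.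
  induction ms as [|u ms IH]; intros p H G; [exact H|].
  destruct G as [G1 G2]. unfold endp; simpl. apply IH; auto.
Qed.

Lemma endp_shift ms : forall p v, endp (padd p v) ms = padd (endp p ms) v.
Proof.
  induction ms as [|u ms IH]; intros p v; [reflexivity|].
  unfold endp; simpl. rewrite padd_comm_assoc. apply IH.
Qed.

Lemma endp_app p ms1 ms2 : endp p (ms1 ++ ms2) = endp (endp p ms1) ms2.
Proof. unfold endp. apply fold_left_app. Qed.

Lemma good_app X ms1 : forall p ms2, good X p ms1 -> good X (endp p ms1) ms2 ->
  good X p (ms1 ++ ms2).
Proof.
  induction ms1 as [|u ms1 IH]; intros p ms2 G1 G2; simpl in *; [exact G2|].
  destruct G1; split; auto.
Qed.

Lemma good_rev X ms : forall p, In p X -> good X p ms ->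
  good X (endp p ms) (rev (map neg ms)) /\ endp (endp p ms) (rev (map neg ms)) = p.
Proof.
  induction ms as [|u ms IH]; intros p Hp G; [simpl; auto|].
  destruct G as [G1 G2].
  destruct (IH _ G1 G2) as [R1 R2].
  change (endp p (u :: ms)) with (endp (padd p u) ms).
  simpl rev. split.
  - apply good_app; auto. rewrite R2. simpl. rewrite padd_neg. auto.
  - rewrite endp_app, R2. unfold endp; simpl. apply padd_neg.
Qed.

Lemma shadow X ms : forall q, exists ms', good X q ms' /\ endp q ms' = apply_seq X q ms /\
  (ms' = ms \/ (length ms' < length ms)%nat) /\ incl ms' ms.
Proof.
  induction ms as [|u ms IH]; intros q.
  - exists []. simpl. repeat split; auto. apply incl_refl.
  - unfold apply_seq; simpl. unfold f at 2.
    destruct (in_dec pt_eq_dec (padd q u) X) as [i|n].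
    + destruct (IH (padd q u)) as [ms'' [A [B [C D]]]].
      exists (u :: ms''). simpl. repeat split; auto.
      * destruct C as [C|C]; [left; subst; auto | right; simpl; lia].
      * apply incl_cons; [left; auto|]. apply incl_tl; auto.
    + destruct (IH q) as [ms'' [A [B [C D]]]].
      exists ms''. repeat split; auto.
      * right. destruct C as [C|C]; [subst; simpl; lia | simpl; lia].
      * apply incl_tl; auto.
Qed.

Lemma neg_U u : In u U -> In (neg u) U.
Proof.
  unfold U; simpl; intros H.
  destruct H as [H|[H|[H|[H|H]]]]; subst; unfold neg; simpl; auto; contradiction.
Qed.

Lemma adj_move a b : adjacent a b -> In (psub b a) U.
Proof.
  unfold adjacent, psub, U. destruct a as [a1 a2], b as [b1 b2]; simpl. intros H.
  assert ((b1 - a1 = -1 /\ b2 - a2 = 0) \/ (b1 - a1 = 1 /\ b2 - a2 = 0) \/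
          (b1 - a1 = 0 /\ b2 - a2 = 1) \/ (b1 - a1 = 0 /\ b2 - a2 = -1)) as C by lia.
  destruct C as [[-> ->]|[[-> ->]|[[-> ->]|[-> ->]]]]; simpl; auto.
Qed.

Lemma chain_moves X l : forall a b, chain (a :: l ++ [b]) ->
  (forall p, In p (l ++ [b]) -> In p X) ->
  exists ms, incl ms U /\ good X a ms /\ endp a ms = b.
Proof.
  induction l as [|c l IH]; intros a b Hc Hin.
  - simpl in Hc. destruct Hc as [Hab _].
    exists [psub b a]. repeat split.
    + intros u [<-|[]]. apply adj_move; auto.
    + rewrite padd_psub. apply Hin. simpl; auto.
    + unfold endp; simpl. apply padd_psub.
  - simpl in Hc. destruct Hc as [Hac Hc].
    destruct (IH c b Hc) as [ms [A [B C]]].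
    { intros p Hp. apply Hin. simpl; auto. }
    exists (psub c a :: ms). repeat split.
    + intros u [<-|Hu]. apply adj_move; auto. apply A; auto.
    + rewrite padd_psub. apply Hin. simpl; auto.
    + rewrite padd_psub. exact B.
    + unfold endp; simpl. rewrite padd_psub. exact C.
Qed.

Lemma conn_moves X a b : connected X -> In a X -> In b X ->
  exists ms, incl ms U /\ good X a ms /\ endp a ms = b.
Proof.
  intros HX Ha Hb. destruct (HX a b Ha Hb) as [l [Hl Hc]].
  apply (chain_moves X l a b Hc).
  intros p Hp. apply in_app_or in Hp. destruct Hp as [Hp|[<-|[]]]; auto.
Qed.

Definition lexle (e c : pt) : Prop :=
  fst e < fst c \/ (fst e = fst c /\ snd e <= snd c).

Lemma lexmin_ex (X : list pt) : X <> [] -> exists e, In e X /\ forall c, In c X -> lexle e c.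
Proof.
  induction X as [|x X IH]; intros H; [contradiction|].
  destruct X as [|y X'].
  - exists x. split; [left; auto|]. intros c [<-|[]]. right; lia.
  - destruct IH as [e [He Hmin]]; [discriminate|].
    destruct (Z_lt_le_dec (fst x) (fst e)) as [L|L].
    + exists x. split; [left; auto|]. intros c [<-|Hc]; [right; lia|].
      specialize (Hmin c Hc). unfold lexle in *. lia.
    + destruct (Z.eq_dec (fst x) (fst e)) as [E|E].
      * destruct (Z_lt_le_dec (snd x) (snd e)) as [L2|L2].
        -- exists x. split; [left; auto|]. intros c [<-|Hc]; [right; lia|].
           specialize (Hmin c Hc). unfold lexle in *. lia.
        -- exists e. split; [right; auto|]. intros c [<-|Hc]; [unfold lexle; lia|auto].
      * exists e. split; [right; auto|]. intros c [<-|Hc]; [unfold lexle; lia|auto].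
Qed.

Lemma lexmin_refl (X : list pt) e c : (forall c, In c X -> lexle e c) -> In c X ->
  In (padd e (psub e c)) X -> c = e.
Proof.
  intros Hmin Hc H2. pose proof (Hmin c Hc) as A. pose proof (Hmin _ H2) as B.
  destruct c as [c1 c2], e as [e1 e2]. unfold lexle, padd, psub in *; simpl in *.
  f_equal; lia.
Qed.

Section Main.
Variable X : list pt.
Variable e : pt.
Hypothesis He : In e X.
Hypothesis Hmin : forall c, In c X -> lexle e c.

Lemma merge n : forall c w1, length w1 = n -> incl w1 U -> In c X -> good X c w1 ->
  endp c w1 = e -> exists w, incl w U /\ apply_seq X e w = apply_seq X c w.
Proof.
  induction n as [n IH] using lt_wf_ind.
  intros c w1 Hlen HU Hc Hg Hend.
  destruct (pt_eq_dec c e) as [->|Hne].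
  { exists []. split; [intros u []|reflexivity]. }
  destruct (shadow X w1 e) as [ms' [A [B [C D]]]].
  destruct C as [C|C].
  - exfalso. subst ms'. apply Hne.
    apply (lexmin_refl X e c Hmin Hc).
    assert (E : endp e w1 = padd e (psub e c)).
    { transitivity (endp (padd c (psub e c)) w1).
      { rewrite padd_psub; reflexivity. }
      rewrite endp_shift, Hend. reflexivity. }
    rewrite <- E. apply good_in; auto.
  - set (c1 := endp e ms') in *.
    destruct (good_rev X ms' e He A) as [R1 R2].
    destruct (IH (length ms') ltac:(lia) c1 (rev (map neg ms')) ltac:(rewrite length_rev, length_map; reflexivity))
      as [w2 [W1 W2]]; auto.
    + intros u Hu. apply in_rev in Hu. apply in_map_iff in Hu.
      destruct Hu as [v [<- Hv]]. apply neg_U. apply HU, D, Hv.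
    + apply good_in; auto.
    + exists (w1 ++ w2). split.
      * intros u Hu. apply in_app_or in Hu. destruct Hu; auto.
      * unfold apply_seq in *. rewrite !fold_left_app.
        pose proof (good_apply X w1 c Hg) as Hg'. unfold apply_seq in Hg'.
        rewrite <- B, Hg', Hend. symmetry. exact W2.
Qed.
End Main.

Theorem lemma2 (X : list pt) (HX : connected X) :
  forall xI xI' : pt, In xI X -> In xI' X ->
    exists us : list pt, (forall u, In u us -> In u U) /\
      apply_seq X xI us = apply_seq X xI' us.
Proof.
  intros xI xI' H1 H2.
  destruct (lexmin_ex X) as [e [He Hmin]]; [destruct X; [contradiction|discriminate]|].
  destruct (conn_moves X xI e HX H1 He) as [ms0 [U0 [G0 E0]]].
  set (c := apply_seq X xI' ms0).
  assert (Hc : In c X) by (apply apply_in; auto).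
  destruct (conn_moves X c e HX Hc He) as [w1 [U1 [G1 E1]]].
  destruct (merge X e He Hmin (length w1) c w1 eq_refl U1 Hc G1 E1) as [w [UW EW]].
  exists (ms0 ++ w). split.
  - intros u Hu. apply in_app_or in Hu. destruct Hu; auto.
  - unfold apply_seq in *. rewrite !fold_left_app.
    pose proof (good_apply X ms0 xI G0) as G0'. unfold apply_seq in G0'.
    rewrite G0', E0. exact EW.
Qed.
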